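(* Let $\lambda\in\mathbb{C}$ and complex sequences $(p_l)_{l\in\mathbb{Z}},(q_m)_{m\in\mathbb{Z}}$ be given, with $p_l\ne\lambda$, $q_m\neq\lambda$. Fix $s_l,t_m\in\mathbb{C}$ with $s_l^2=p_l-\lambda$, $t_m^2=q_m-\lambda$ (i.e. $s_l=(p_l-\lambda)^{1/2}$, $t_m=(q_m-\lambda)^{1/2}$), and set $\alpha_l=1/s_l$, $\beta_m=1/t_m$. Let $\phi:\mathbb{Z}^2\to\mathbb{C}$ be a (generic, nonvanishing) solution of \[ \frac{\widetilde{\overline\phi}}{\phi}=\frac{\alpha_l\,\overline\phi-\beta_m\,\widetilde\phi}{\alpha_l\,\widetilde\phi-\beta_m\,\overline\phi}. \] Then \[ u=\frac{s_l\,\overline\phi-t_m\,\widetilde\phi}{\phi},\qquad v=s_l\,\frac{\overline\phi}{\phi} \] satisfy respectively the non-autonomous dKdV equation $\widetilde{\overline u}-u=\frac{q_{m+1}-p_l}{\widetilde u}-\frac{q_m-p_{l+1}}{\overline u}$ and the equation \[ \begin{aligned} &q_m\big(v\overline v-\widetilde v\widetilde{\overline v}\big)^2+\big(v-\widetilde{\overline v}\big)\big(\overline v-\widetilde v\big)\big(\lambda-v\overline v\big)\big(\lambda-\widetilde v\widetilde{\overline v}\big) +\big(p_{l+1}v-p_l\widetilde{\overline v}\big)\big(p_l\overline v-p_{l+1}\widetilde v\big)\\ &\quad-(p_l+p_{l+1})\big(\lambda v\overline v+\lambda\widetilde v\widetilde{\overline v}-2v\overline v\widetilde v\widetilde{\overline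 v}\big) +\big(p_{l+1}v\widetilde v+p_l\overline v\widetilde{\overline v}\big)\big(2\lambda-v\overline v-\widetilde v\widetilde{\overline v}\big)=0. \end{aligned} \]
   Context: Shift notation: for $f:\mathbb{Z}^2\to\mathbb{C}$, $f=f_{l,m}$, $\overline f=f_{l+1,m}$, $\widetilde f=f_{l,m+1}$, $\widetilde{\overline f}=f_{l+1,m+1}$; shifts act on parameters as well ($\overline{p_l}=p_{l+1}$, $\widetilde{q_m}=q_{m+1}$). *)

(* Defs.v *)
From HB Require Import structures.
From mathcomp Require Import all_boot all_order all_algebra.
From mathcomp Require Import complex.
From mathcomp Require Import reals.
Set Implicit Arguments. Unset Strict Implicit. Unset Printing Implicit Defensive.
Import Order.TTheory GRing.Theory Num.Theory.
Local Open Scope ring_scope.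

(* u = (s_l phibar - t_m phitilde)/phi at the lattice point (l,m) *)
Definition u_of (R : realType) (s t : int -> R[i]) (phi : int -> int -> R[i])
  (l m : int) : R[i] :=
  (s l * phi (l + 1)%R m - t m * phi l (m + 1)%R) / phi l m.

Definition v_of (R : realType) (s : int -> R[i]) (phi : int -> int -> R[i])
  (l m : int) : R[i] :=
  s l * (phi (l + 1)%R m / phi l m).

(* Main.v *)
Require Import Defs.
From HB Require Import structures.
From mathcomp Require Import all_boot all_order all_algebra.
From mathcomp Require Import complex.
From mathcomp Require Import reals.
From mathcomp Require Import ring.
Import Order.TTheory GRing.Theory Num.Theory.
Local Open Scope ring_scope.

Ltac fld := field; try (repeat (apply/andP; split); assumption).

Lemma rel_clean (K : fieldType) (a b x y z w : K) :
  a != 0 -> b != 0 -> x != 0 -> w != 0 ->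
  w / x = (a^-1 * y - b^-1 * z) / (a^-1 * z - b^-1 * y) ->
  b * z - a * y != 0 /\ w = x * (b * y - a * z) / (b * z - a * y).
Proof.
move=> ha hb hx hw h.
have hd : a^-1 * z - b^-1 * y != 0.
  apply/negP=> /eqP h0; move: h; rewrite h0 invr0 mulr0 => /eqP.
  by rewrite mulf_eq0 invr_eq0 (negbTE hx) (negbTE hw).
have he : b * z - a * y = a * b * (a^-1 * z - b^-1 * y).
  by fld.
have hd' : b * z - a * y != 0 by rewrite he !mulf_neq0.
split => //.
have -> : w = w / x * x by fld.
rewrite h. fld.
Qed.

Lemma dkdv (K : fieldType) (A B C D E F G H s0 s1 t0 t1 : K) :
  A != 0 -> B != 0 -> C != 0 -> D != 0 ->
  s0 != 0 -> s1 != 0 -> t0 != 0 -> t1 != 0 ->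
  t0 * C - s0 * B != 0 -> D = A * (t0 * B - s0 * C) / (t0 * C - s0 * B) ->
  t0 * D - s1 * E != 0 -> G = B * (t0 * E - s1 * D) / (t0 * D - s1 * E) ->
  t1 * F - s0 * D != 0 -> H = C * (t1 * D - s0 * F) / (t1 * F - s0 * D) ->
  (s0 * D - t1 * F) / C != 0 -> (s1 * E - t0 * D) / B != 0 ->
  (s1 * G - t1 * H) / D - (s0 * B - t0 * C) / A =
  (t1^+2 - s0^+2) / ((s0 * D - t1 * F) / C) - (t0^+2 - s1^+2) / ((s1 * E - t0 * D) / B).
Proof.
move=> hA hB hC hD hs0 hs1 ht0 ht1 hd1 eD hd2 eG hd3 eH hut hub.
subst G H.
have hn : t0 * B - s0 * C != 0.
  apply/negP=> /eqP h0; move: hD; by rewrite eD h0 mulr0 mul0r eqxx.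
have hu1 : s0 * D - t1 * F != 0 by move: hut; rewrite mulf_eq0 negb_or => /andP[].
have hu2 : s1 * E - t0 * D != 0 by move: hub; rewrite mulf_eq0 negb_or => /andP[].
subst D.
field.
set d1 := t0 * C - s0 * B in hd1 hd2 hd3 hu1 hu2 *.
set n := t0 * B - s0 * C in hn hd2 hd3 hu1 hu2 *.
have X3 : s1 * E * d1 - t0 * (A * n) = (s1 * E - t0 * (A * n / d1)) * d1 by fld.
have X5 : s0 * (A * n) + - (t1 * F) * d1 = (s0 * (A * n / d1) - t1 * F) * d1 by fld.
have X8 : t1 * F * d1 - s0 * (A * n) = (t1 * F - s0 * (A * n / d1)) * d1 by fld.
have X9 : t0 * (A * n) + - (s1 * E) * d1 = (t0 * (A * n / d1) - s1 * E) * d1 by fld.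
by rewrite X3 X5 X8 X9 !mulf_eq0 !negb_or hA hB hC hd1 hn hu1 hu2 hd2 hd3.
Qed.

Lemma vid (K : fieldType) (A B C D E G s0 s1 t0 lam p0 p1 q0 : K) :
  A != 0 -> B != 0 -> C != 0 -> D != 0 ->
  p0 = s0 ^+ 2 + lam -> p1 = s1 ^+ 2 + lam -> q0 = t0 ^+ 2 + lam ->
  t0 * C - s0 * B != 0 -> D = A * (t0 * B - s0 * C) / (t0 * C - s0 * B) ->
  t0 * D - s1 * E != 0 -> G = B * (t0 * E - s1 * D) / (t0 * D - s1 * E) ->
  let v0 := s0 * (B / A) in
  let vb := s1 * (E / B) in
  let vt := s0 * (D / C) in
  let vtb := s1 * (G / D) in
     q0 * (v0 * vb - vt * vtb) ^+ 2
     + (v0 - vtb) * (vb - vt) * (lam - v0 * vb) * (lam - vt * vtb)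
     + (p1 * v0 - p0 * vtb) * (p0 * vb - p1 * vt)
     - (p0 + p1) * (lam * v0 * vb + lam * vt * vtb - 2 * v0 * vb * vt * vtb)
     + (p1 * v0 * vt + p0 * vb * vtb) * (2 * lam - v0 * vb - vt * vtb)
     = 0.
Proof.
move=> hA hB hC hD ep0 ep1 eq0 hd1 eD hd2 eG v0 vb vt vtb.
rewrite /v0 /vb /vt /vtb.
subst G p0 p1 q0.
have hn : t0 * B - s0 * C != 0.
  apply/negP=> /eqP h0; move: hD; by rewrite eD h0 mulr0 mul0r eqxx.
subst D.
field.
set d1 := t0 * C - s0 * B in hd1 hd2 *.
set n := t0 * B - s0 * C in hn hd2 *.
have X9 : t0 * (A * n) + - (s1 * E) * d1 = (t0 * (A * n / d1) - s1 * E) * d1 by fld.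
by rewrite X9 !mulf_eq0 !negb_or hA hB hC hd1 hn hd2.
Qed.

Arguments dkdv {K A B C D E F G H s0 s1 t0 t1}.
Arguments vid {K A B C D E G s0 s1 t0 lam p0 p1 q0}.

Theorem mainTheorem9 (R : realType) (lam : R[i]) (p q s t : int -> R[i])
  (phi : int -> int -> R[i])
  (hp : forall l, p l != lam) (hq : forall m, q m != lam)
  (hs : forall l, s l ^+ 2 = p l - lam) (ht : forall m, t m ^+ 2 = q m - lam)
  (hphi0 : forall l m, phi l m != 0)
  (hphi : forall l m,
     phi (l + 1) (m + 1) / phi l m =
     ((s l)^-1 * phi (l + 1) m - (t m)^-1 * phi l (m + 1)) /
     ((s l)^-1 * phi l (m + 1) - (t m)^-1 * phi (l + 1) m)) :
  (forall l m,
     let u := u_of s t phi in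
     u l (m + 1) != 0 -> u (l + 1) m != 0 ->
     u (l + 1) (m + 1) - u l m =
       (q (m + 1) - p l) / u l (m + 1) - (q m - p (l + 1)) / u (l + 1) m) /\
  (forall l m,
     let v0 := v_of s phi l m in
     let vb := v_of s phi (l + 1) m in
     let vt := v_of s phi l (m + 1) in
     let vtb := v_of s phi (l + 1) (m + 1) in
     q m * (v0 * vb - vt * vtb) ^+ 2
     + (v0 - vtb) * (vb - vt) * (lam - v0 * vb) * (lam - vt * vtb)
     + (p (l + 1) * v0 - p l * vtb) * (p l * vb - p (l + 1) * vt)
     - (p l + p (l + 1)) * (lam * v0 * vb + lam * vt * vtb - 2 * v0 * vb * vt * vtb)
     + (p (l + 1) * v0 * vt + p l * vb * vtb) * (2 * lam - v0 * vb - vt * vtb)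
     = 0).
Proof.
have hs0 : forall l, s l != 0.
  move=> l; apply/negP=> /eqP h0; move: (hs l); rewrite h0 expr0n /= => /eqP.
  by rewrite eq_sym subr_eq0 (negbTE (hp l)).
have ht0 : forall m, t m != 0.
  move=> m; apply/negP=> /eqP h0; move: (ht m); rewrite h0 expr0n /= => /eqP.
  by rewrite eq_sym subr_eq0 (negbTE (hq m)).
have hrel : forall l m,
    t m * phi l (m + 1) - s l * phi (l + 1) m != 0 /\
    phi (l + 1) (m + 1) = phi l m * (t m * phi (l + 1) m - s l * phi l (m + 1))
                          / (t m * phi l (m + 1) - s l * phi (l + 1) m).
  move=> l m; apply: rel_clean => //; exact: hphi.
have hp' : forall l, p l = s l ^+ 2 + lam by move=> l; rewrite hs subrK.
have hq' : forall m, q m = t m ^+ 2 + lam by move=> m; rewrite ht subrK.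
split.
- move=> l m u hut hub; rewrite /u /u_of in hut hub *.
  have -> : q (m + 1) - p l = t (m + 1) ^+ 2 - s l ^+ 2 by rewrite hp' hq'; ring.
  have -> : q m - p (l + 1) = t m ^+ 2 - s (l + 1) ^+ 2 by rewrite hp' hq'; ring.
  case: (hrel l m) => h1 e1.
  case: (hrel (l + 1) m) => h2 e2.
  case: (hrel l (m + 1)) => h3 e3.
  have := dkdv (hphi0 l m) (hphi0 (l + 1) m) (hphi0 l (m + 1)) (hphi0 (l + 1) (m + 1))
                (hs0 l) (hs0 (l + 1)) (ht0 m) (ht0 (m + 1)) h1 e1 h2 e2 h3 e3 hut hub.
  by [].
- move=> l m v0 vb vt vtb; rewrite /v0 /vb /vt /vtb /v_of.
  case: (hrel l m) => h1 e1.
  case: (hrel (l + 1) m) => h2 e2.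
  have := vid (hphi0 l m) (hphi0 (l + 1) m) (hphi0 l (m + 1)) (hphi0 (l + 1) (m + 1))
                (hp' l) (hp' (l + 1)) (hq' m) h1 e1 h2 e2.
  by [].
Qed.
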